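(* For any $\varepsilon \in \{-1,1\}^n$ and any $y \in \mathbb{R}^n$, let $$S = \{1 \le i \le n : \mathrm{sign}(y_i) \neq \varepsilon_i\}.$$ Then $$\left\| y - \left\langle y, \frac{\varepsilon}{\|\varepsilon\|}\right\rangle \frac{\varepsilon}{\|\varepsilon\|}\right\|^2 \ge \frac{\min\{\#S, n - \#S\}}{n}\, \|y\|^2.$$
   Context: $\mathrm{sign}(t)$ denotes the sign of a real number $t$ (with $\mathrm{sign}(0)=0$); $\|\cdot\|$ is the Euclidean norm. *)

(* Defs.v *)
From mathcomp Require Import all_boot all_order all_algebra.
Set Implicit Arguments. Unset Strict Implicit. Unset Printing Implicit Defensive.
Import Order.TTheory GRing.Theory Num.Theory.
Local Open Scope ring_scope.

Definition dotv (R : rcfType) (n : nat) (x y : 'I_n -> R) : R :=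
  \sum_(i < n) x i * y i.

Definition normv (R : rcfType) (n : nat) (x : 'I_n -> R) : R :=
  Num.sqrt (dotv x x).

(* Main.v *)
Require Import Defs.
From mathcomp Require Import all_boot all_order all_algebra.
From mathcomp Require Import ring lra zify.
Import Order.TTheory GRing.Theory Num.Theory.
Local Open Scope ring_scope.

Lemma cs (R : rcfType) (n : nat) (P : {set 'I_n}) (a : 'I_n -> R) :
  (\sum_(i in P) a i) ^+ 2 <= #|P|%:R * \sum_(i in P) a i ^+ 2.
Proof.
rewrite expr2 mulr_suml.
apply: (@le_trans _ _ (\sum_(i in P) \sum_(j in P) (a i ^+ 2 + a j ^+ 2) / 2)).
  apply: ler_sum => i _; rewrite mulr_sumr; apply: ler_sum => j _.
  have h : 0 <= (a i - a j) ^+ 2 by apply: sqr_ge0.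
  lra.
under eq_bigr do rewrite -mulr_suml big_split /= sumr_const.
rewrite -mulr_suml big_split /= sumr_const.
have h2 : forall x : R, (x + x) / 2 = x by move=> x; field.
rewrite sumrMnl mulr_natl h2; exact: lexx.
Qed.

Lemma signs (R : rcfType) (e y : R) (he : e = 1 \/ e = -1) :
  (Num.sg y != e -> y * e <= 0) /\ (Num.sg y = e -> 0 <= y * e).
Proof.
case: (ltrgtP y 0) => hy.
- rewrite ltr0_sg //; case: he => ->; split => h; first [lra | by rewrite eqxx in h | idtac].
- rewrite gtr0_sg //; case: he => ->; split => h; first [lra | by rewrite eqxx in h | idtac].
- rewrite hy sgr0 mul0r; split => //.
Qed.


Lemma key (R : rcfType) (n : nat) (eps y : 'I_n -> R)
  (heps : forall i, eps i = 1 \/ eps i = -1) (S : {set 'I_n}) :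
  S = [set i : 'I_n | Num.sg (y i) != eps i] ->
  (dotv y eps) ^+ 2 <= (n - minn #|S| (n - #|S|))%:R * dotv y y.
Proof.
move=> hS.
have e2 : forall i, (y i * eps i) ^+ 2 = y i * y i.
  by move=> i; case: (heps i) => ->; rewrite expr2; ring.
rewrite /dotv (bigID (fun i => i \in S)) /= [X in _ <= _ * X](bigID (fun i => i \in S)) /=.
have hC : forall F : 'I_n -> R, \sum_(i < n | i \notin S) F i = \sum_(i in ~: S) F i.
  by move=> F; apply: eq_bigl => i; rewrite in_setC.
rewrite !hC.
set b := \sum_(i in S) _. set a := \sum_(i in ~: S) _.
set Y1 := \sum_(i in S) _. set Y2 := \sum_(i in ~: S) _.
have hb : b <= 0.
  apply: sumr_le0 => i; rewrite hS inE => h.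
  exact: (proj1 (@signs _ _ (y i) (heps i)) h).
have ha : 0 <= a.
  apply: sumr_ge0 => i; rewrite hS !inE negbK => /eqP h.
  exact: (proj2 (@signs _ _ (y i) (heps i)) h).
have hY1 : 0 <= Y1 by apply: sumr_ge0 => i _; rewrite -expr2 sqr_ge0.
have hY2 : 0 <= Y2 by apply: sumr_ge0 => i _; rewrite -expr2 sqr_ge0.
have cb : b ^+ 2 <= #|S|%:R * Y1.
  by rewrite /Y1 -(eq_bigr _ (fun i _ => e2 i)); apply: cs.
have ca : a ^+ 2 <= #|~: S|%:R * Y2.
  by rewrite /Y2 -(eq_bigr _ (fun i _ => e2 i)); apply: cs.
have hc := cardsC S. rewrite card_ord in hc.
have m1 : (#|S| <= n - minn #|S| (n - #|S|))%N by lia.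
have m2 : (#|~: S| <= n - minn #|S| (n - #|S|))%N by lia.
move: m1 m2; rewrite -!(ler_nat R).
have k0 : 0 <= (#|S|%:R : R) := ler0n _ _.
have p0 : 0 <= (#|~: S|%:R : R) := ler0n _ _.
move: (n - _)%N%:R (#|S|%:R) (#|~: S|%:R) k0 p0 cb ca => M k p k0 p0 cb ca m1 m2.
case: (lerP 0 (b + a)) => h.
  have : (b + a) ^+ 2 <= a ^+ 2 by nra.
  nra.
have : (b + a) ^+ 2 <= b ^+ 2 by nra.
nra.
Qed.

Theorem lemma2 (R : rcfType) (n : nat) (eps y : 'I_n -> R)
  (heps : forall i, eps i = 1 \/ eps i = -1) :
  let u := fun i => eps i / normv eps in
  let S := [set i : 'I_n | Num.sg (y i) != eps i] in
  (normv (fun i => y i - dotv y u * u i)) ^+ 2 >=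
    (minn #|S| (n - #|S|))%:R / n%:R * (normv y) ^+ 2.
Proof.
cbv zeta.
set u := (fun i => eps i / normv eps).
set S := [set i | _].
have hk := @key R n eps y heps S erefl.
have dge0 : forall w : 'I_n -> R, 0 <= dotv w w.
  by move=> w; apply: sumr_ge0 => i _; rewrite -expr2 sqr_ge0.
rewrite /normv !sqr_sqrtr ?dge0 //.
case: (posnP n) => [n0|npos].
  have -> : (n%:R : R) = 0 by rewrite n0.
  by rewrite invr0 mulr0 mul0r dge0.
have m_le : (minn #|S| (n - #|S|) <= n)%N by lia.
move: hk; rewrite natrB //.
set N := (n%:R : R). have N0 : 0 < N by rewrite ltr0n.
have hee : dotv eps eps = N.
  rewrite /dotv (eq_bigr (fun=> 1)); last by move=> i _; case: (heps i) => ->; rewrite ?mulr1 ?mulrNN ?mulr1.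
  by rewrite sumr_const card_ord.
have hne : normv eps = Num.sqrt N by rewrite /normv hee.
set s := Num.sqrt N.
have hs : s * s = N by rewrite -expr2 sqr_sqrtr // ltW.
have s0 : s != 0 by rewrite gt_eqF // sqrtr_gt0.
have hu : dotv y u = dotv y eps / s.
  by rewrite /dotv mulr_suml; apply: eq_bigr => i _; rewrite /u hne mulrA.
set D := dotv y eps. set Y := dotv y y.
have hwi : forall i, (y i - dotv y u * u i) * (y i - dotv y u * u i) =
   y i * y i - (2 * (D / N)) * (y i * eps i) + (D / N) ^+ 2 * (eps i * eps i).
  move=> i; rewrite hu -/D /u hne -/s -hs; field; exact: s0.
rewrite {1}/dotv (eq_bigr _ (fun i _ => hwi i)) big_split sumrB /= -!mulr_sumr.
rewrite -/(dotv y y) -/(dotv y eps) -/(dotv eps eps) hee -/D -/Y.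
move=> hk.
set m := (minn _ _)%:R.
rewrite -subr_ge0.
have -> : Y - 2 * (D / N) * D + (D / N) ^+ 2 * N - m / N * Y = ((N - m) * Y - D ^+ 2) / N.
  field; by rewrite gt_eqF.
apply: divr_ge0; last exact: ltW.
by rewrite subr_ge0.
Qed.
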